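(* Let $g:\{\pm1\}^{m_1}\times\{\pm1\}^{m_2}\to\{\pm1\}$ be a gadget with $\hat g(S,T)=0$ whenever $S=\emptyset$ or $T=\emptyset$. Then for all $k,d,n$, $$L_{1,k}(\mathrm{XOR},d,1,1,n)\le\Bigl(\max_{S,T}|\hat g(S,T)|\Bigr)^{-k}L_{1,k}(g,d,m_1,m_2,n)\le 2^{(m_1+m_2)k/2}L_{1,k}(g,d,m_1,m_2,n).$$
   Context: $\hat g(S,T)=\mathbb{E}[g(\mathbf{x},\mathbf{y})\prod_{j\in S}\mathbf{x}_j\prod_{j\in T}\mathbf{y}_j]$ for uniform $\mathbf{x}\in\{\pm1\}^{m_1},\mathbf{y}\in\{\pm1\}^{m_2}$. For a randomized two-party protocol $\mathcal{C}:(\{\pm1\}^{m_1})^n\times(\{\pm1\}^{m_2})^n\to[-1,1]$ (value = expected output over internal randomness; inputs are $n$ blocks $x_i\in\{\pm1\}^{m_1}$, $y_i\in\{\pm1\}^{m_2}$), its $g$-fiber is $\mathcal{C}_{\downarrow g}(z)=\mathbb{E}[\mathcal{C}(\mathbf{x},\mathbf{y})\mid g(\mathbf{x}_i,\mathbf{y}_i)=z_i\ \forall i]$ for uniform $\mathbf{x},\mathbf{y}$. For $f:\{\pm1\}^n\to\mathbb{R}$, $L_{1,k}(f)=\sum_{|I|=k}|\hat f(I)|$. $L_{1,k}(g,d,m_1,m_2,n)$ denotes the supremum of $L_{1,k}(\mathcal{C}_{\downarrow g})$ over all such randomized protocols with at most $d$ bits of communication. $\mathrm{XOR}:\{\pm1\}\times\{\pm1\}\to\{\pm1\}$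 is the gadget $\mathrm{XOR}(a,b)=ab$ (so $m_1=m_2=1$). *)

(* Defs.v *)
From HB Require Import structures.
From mathcomp Require Import all_boot all_order all_algebra.
From mathcomp Require Import classical_sets reals.
Set Implicit Arguments. Unset Strict Implicit. Unset Printing Implicit Defensive.
Import Order.TTheory GRing.Theory Num.Theory.
Local Open Scope ring_scope.
Local Open Scope classical_set_scope.

(* A +-1 value is encoded by a bool: sgn false = 1, sgn true = -1. *)
Definition sgn {R : ringType} (b : bool) : R := if b then -1 else 1.

Notation cube m := {ffun 'I_m -> bool}.
Notation blocks n m := {ffun 'I_n -> cube m}.

Definition Exp {R : realType} (T : finType) (F : T -> R) : R :=
  (\sum_(t : T) F t) / #|T|%:R.

Definition chi {R : realType} m (S : {set 'I_m}) (x : cube m) : R :=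
  \prod_(j in S) sgn (x j).

Definition gadget m1 m2 := cube m1 -> cube m2 -> bool.

Definition ghat {R : realType} m1 m2 (g : gadget m1 m2)
    (S : {set 'I_m1}) (T : {set 'I_m2}) : R :=
  Exp (fun xy : cube m1 * cube m2 =>
         sgn (g xy.1 xy.2) * chi S xy.1 * chi T xy.2).

Definition max_ghat {R : realType} m1 m2 (g : gadget m1 m2) : R :=
  \big[Num.max/0]_(ST : {set 'I_m1} * {set 'I_m2}) `|ghat g ST.1 ST.2|.

(* XOR gadget, m1 = m2 = 1: XOR(a,b) = a b; in the bool encoding this is xor *)
Definition xor_gadget : gadget 1 1 := fun a b => a ord0 (+) b ord0.

(* Deterministic two-party protocol trees: Alice holds A, Bob holds B.
   Each internal node is one bit sent by its owner, computed from that
   owner's input; leaves carry the output bit (a +-1 value). *)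
Inductive proto (A B : Type) :=
| Leaf of bool
| NodeA of (A -> bool) & proto A B & proto A B
| NodeB of (B -> bool) & proto A B & proto A B.
Arguments Leaf {A B}.

(* communication cost = depth of the tree *)
Fixpoint depth A B (p : proto A B) : nat :=
  match p with
  | Leaf _ => 0
  | NodeA _ l r => (maxn (depth l) (depth r)).+1
  | NodeB _ l r => (maxn (depth l) (depth r)).+1
  end.

Fixpoint run A B (p : proto A B) (x : A) (y : B) : bool :=
  match p with
  | Leaf b => b
  | NodeA f l r => if f x then run r x y else run l x y
  | NodeB f l r => if f y then run r x y else run l x y
  end.

(* A randomized (public-coin) protocol: a finite probability distribution
   over deterministic protocols, given as a weighted list. *)
Definition rproto (R : realType) A B := seq (R * proto A B).

Definition rproto_ok {R : realType} A B (d : nat) (P : rproto R A B) : Prop :=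
  [/\ all (fun wp => 0 <= wp.1) P,
      \sum_(wp <- P) wp.1 = 1
    & all (fun wp => depth wp.2 <= d)%N P].

Definition rvalue {R : realType} A B (P : rproto R A B) (x : A) (y : B) : R :=
  \sum_(wp <- P) wp.1 * sgn (run wp.2 x y).

Definition fiber {R : realType} m1 m2 (g : gadget m1 m2) n
    (C : blocks n m1 -> blocks n m2 -> R) (z : cube n) : R :=
  let cond := fun xy : blocks n m1 * blocks n m2 =>
                [forall i, g (xy.1 i) (xy.2 i) == z i] in
  (\sum_(xy | cond xy) C xy.1 xy.2) / #|[pred xy | cond xy]|%:R.

Definition fhat {R : realType} n (f : cube n -> R) (I : {set 'I_n}) : R :=
  Exp (fun z : cube n => f z * chi I z).

Definition L1k {R : realType} n (k : nat) (f : cube n -> R) : R :=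
  \sum_(I : {set 'I_n} | #|I| == k) `|fhat f I|.

Definition L1k_gadget {R : realType} m1 m2 (g : gadget m1 m2) (k d n : nat) : R :=
  sup [set L1k k (fiber g (rvalue P)) | P in
         [set P : rproto R (blocks n m1) (blocks n m2) | rproto_ok d P]].

(* Main.v *)
Require Import Defs.
From HB Require Import structures.
From mathcomp Require Import all_boot all_order all_algebra.
From mathcomp Require Import classical_sets reals.
From mathcomp Require Import ring lra.
Set Implicit Arguments. Unset Strict Implicit. Unset Printing Implicit Defensive.
Import Order.TTheory GRing.Theory Num.Theory.
Local Open Scope ring_scope.

Section Aux.
Variable R : realType.

Lemma sgnM (a b : bool) : sgn (a (+) b) = sgn a * sgn b :> R.
Proof. by case: a; case: b; rewrite /sgn /=; lra. Qed.

Lemma sgn2 (a : bool) : sgn a * sgn a = 1 :> R.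
Proof. by case: a; rewrite /sgn; lra. Qed.

Lemma eq_sgn (a b : bool) : ((a == b)%:R : R) = (1 + sgn a * sgn b) / 2.
Proof. by case: a; case: b; rewrite /sgn /=; lra. Qed.

Lemma sum_ffun_prod (n : nat) (J : finType) (F : 'I_n -> J -> R) :
  \sum_(f : {ffun 'I_n -> J}) \prod_i F i (f i) = \prod_i \sum_j F i j.
Proof. by rewrite bigA_distr_bigA. Qed.

Lemma sum_pair_prod n (J1 J2 : finType) (F : 'I_n -> J1 -> J2 -> R) :
  \sum_(xy : {ffun 'I_n -> J1} * {ffun 'I_n -> J2}) \prod_i F i (xy.1 i) (xy.2 i)
  = \prod_i \sum_(uv : J1 * J2) F i uv.1 uv.2.
Proof.
rewrite -(pair_bigA _ (fun (x : {ffun 'I_n -> J1}) (y : {ffun 'I_n -> J2}) => \prod_i F i (x i) (y i))) /=.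
under eq_bigr => x _ do rewrite (@sum_ffun_prod _ _ (fun i v => F i (x i) v)).
rewrite (@sum_ffun_prod _ _ (fun i u => \sum_v F i u v)).
by apply: eq_bigr => i _; rewrite pair_bigA.
Qed.

Lemma chi0 m (u : cube m) : chi finset.set0 u = 1 :> R.
Proof. by rewrite /chi big_set0. Qed.

Lemma sum_chi0 m (S : {set 'I_m}) : S != finset.set0 -> \sum_(u : cube m) chi S u = 0 :> R.
Proof.
move=> /set0Pn [j0 Hj0].
rewrite /chi; under eq_bigr => u _ do rewrite big_mkcond /=.
rewrite (@sum_ffun_prod _ _ (fun j b => if j \in S then sgn b else 1)).
by rewrite (bigD1 j0) //= Hj0 big_bool /sgn /= addNr mul0r.
Qed.

Lemma sum_set_prod m (f : 'I_m -> R) :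
  \sum_(S : {set 'I_m}) \prod_(j in S) f j = \prod_j (1 + f j).
Proof.
have -> : \prod_j (1 + f j) = \prod_j \sum_(b : bool) (if b then f j else 1).
  by apply: eq_bigr => j _; rewrite big_bool addrC.
rewrite bigA_distr_bigA.
rewrite (reindex (fun phi : {ffun 'I_m -> bool} => [set j | phi j])) /=.
  apply: eq_bigr => phi _; rewrite big_mkcond; apply: eq_bigr => j _.
  by rewrite inE.
exists (fun S : {set 'I_m} => [ffun j => j \in S]) => [phi _|S _].
  by apply/ffunP => j; rewrite ffunE inE.
by apply/setP => j; rewrite inE ffunE.
Qed.

Lemma chi1T (u : cube 1) : chi [set: 'I_1] u = sgn (u ord0) :> R.
Proof.
rewrite /chi (eq_bigl xpredT) ?big_ord1 // => j; by rewrite inE.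
Qed.


Lemma card_cube m : (#|{: cube m}|%:R : R) = 2 ^+ m.
Proof. by rewrite card_ffun card_bool card_ord natrX. Qed.

Lemma card_cube2 m1 m2 : (#|{: cube m1 * cube m2}|%:R : R) = 2 ^+ m1 * 2 ^+ m2.
Proof. by rewrite card_prod natrM !card_cube. Qed.

Lemma ExpE (T : finType) (F : T -> R) : Exp F = (\sum_t F t) / #|{: T}|%:R.
Proof. by []. Qed.

Lemma prod_sgn_eq m (u u' : cube m) :
  \prod_j (1 + sgn (u j) * sgn (u' j)) = (u == u')%:R * 2 ^+ m :> R.
Proof.
case: eqP => [->|neq].
  under eq_bigr do rewrite sgn2.
  by rewrite prodr_const card_ord mul1r.
have [j Hj] : exists j, u j != u' j.
  apply/existsP; apply: contra_notT neq => /existsPn H.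
  by apply/ffunP => j; apply/eqP; move: (H j); rewrite negbK.
rewrite (bigD1 j) //=.
have -> : 1 + sgn (u j) * sgn (u' j) = 0 :> R.
  by move: Hj; case: (u j); case: (u' j); rewrite /sgn //= => _; lra.
by rewrite !mul0r.
Qed.

Lemma sum_chi_chi m (u u' : cube m) :
  \sum_(S : {set 'I_m}) chi S u * chi S u' = (u == u')%:R * 2 ^+ m :> R.
Proof.
rewrite -prod_sgn_eq -sum_set_prod; apply: eq_bigr => S _.
by rewrite /chi -big_split.
Qed.

Lemma parseval m1 m2 (h : gadget m1 m2) :
  \sum_(ST : {set 'I_m1} * {set 'I_m2}) (ghat h ST.1 ST.2) ^+ 2 = 1 :> R.
Proof.
rewrite /ghat /Exp.
set K := (#|_|%:R : R).
have K0 : K != 0 by rewrite /K card_cube2 mulf_neq0 // expf_neq0 // pnatr_eq0.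
under eq_bigr => ST _ do rewrite expr_div_n expr2 big_distrlr /=.
rewrite -big_distrl /= exchange_big /=.
under eq_bigr => p _ do rewrite exchange_big /=.
have E : forall p q : cube m1 * cube m2,
  \sum_(ST : {set 'I_m1} * {set 'I_m2})
     (sgn (h p.1 p.2) * chi ST.1 p.1 * chi ST.2 p.2 *
      (sgn (h q.1 q.2) * chi ST.1 q.1 * chi ST.2 q.2)) =
  sgn (h p.1 p.2) * sgn (h q.1 q.2) * (((p.1 == q.1)%:R * 2 ^+ m1) * ((p.2 == q.2)%:R * 2 ^+ m2)) :> R.
  move=> p q; rewrite -!sum_chi_chi big_distrlr pair_bigA big_distrr /=.
  by apply: eq_bigr => ST _; ring.
under eq_bigr => p _ do under eq_bigr => q _ do rewrite E.
have F : forall p : cube m1 * cube m2,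
  \sum_q sgn (h p.1 p.2) * sgn (h q.1 q.2) *
         ((p.1 == q.1)%:R * 2 ^+ m1 * ((p.2 == q.2)%:R * 2 ^+ m2)) = 2 ^+ m1 * 2 ^+ m2 :> R.
  move=> p; rewrite (bigD1 p) //= !eqxx sgn2 big1 ?addr0 ?mul1r //.
  move=> q Hq; case: (eqVneq p.1 q.1) => H1; last by rewrite !mul0r !mulr0.
  case: (eqVneq p.2 q.2) => H2; last by rewrite !mul0r !mulr0.
  by case/eqP: Hq; case: p q H1 H2 => [? ?] [? ?] /= -> ->.
under eq_bigr => p _ do rewrite F.
have SK : \sum_(p : cube m1 * cube m2) (1:R) = K by rewrite /K -sum1_card natr_sum.
rewrite -[X in \sum_p X]mul1r -big_distrl /= SK.
have -> : (2 ^+ m1 * 2 ^+ m2 : R) = K by rewrite /K card_cube2.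
by rewrite expr2 divff // mulf_neq0.
Qed.


Lemma forall_prod n (P : 'I_n -> bool) : ([forall i, P i]%:R : R) = \prod_i (P i)%:R.
Proof.
case: forallP => H; first by rewrite big1 // => i _; rewrite H.
have : ~~ [forall i, P i] by apply/forallP.
rewrite negb_forall => /existsP [i Hi].
by rewrite (bigD1 i) //= (negbTE Hi) mul0r.
Qed.

Lemma sum_sgn_bal m1 m2 (h : gadget m1 m2) :
  ghat h finset.set0 finset.set0 = 0 :> R ->
  \sum_(uv : cube m1 * cube m2) sgn (h uv.1 uv.2) = 0 :> R.
Proof.
rewrite /ghat ExpE => /eqP; rewrite mulf_eq0 invr_eq0 => /orP [/eqP H|].
  by rewrite -[RHS]H; apply: eq_bigr => uv _; rewrite !chi0 !mulr1.
by rewrite card_cube2 mulf_eq0 !expf_eq0 pnatr_eq0 !andbF.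
Qed.

Lemma card_blocks2 n m1 m2 :
  (#|{: blocks n m1 * blocks n m2}|%:R : R) = (#|{: cube m1 * cube m2}|%:R) ^+ n.
Proof.
have -> : (#|{: blocks n m1 * blocks n m2}|%:R : R) =
   \sum_(xy : blocks n m1 * blocks n m2) \prod_(i < n) (1:R).
  by rewrite -sum1_card natr_sum; apply: eq_bigr => xy _; rewrite big1.
rewrite (@sum_pair_prod n _ _ (fun _ _ _ => 1)) prodr_const card_ord.
by rewrite -sum1_card natr_sum.
Qed.

Lemma fiberE m1 m2 (h : gadget m1 m2) n (C : blocks n m1 -> blocks n m2 -> R)
    (I : {set 'I_n}) :
  ghat h finset.set0 finset.set0 = 0 :> R ->
  fhat (fiber h C) I =
  Exp (fun xy : blocks n m1 * blocks n m2 =>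
         C xy.1 xy.2 * \prod_(i in I) sgn (h (xy.1 i) (xy.2 i))).
Proof.
move=> bal.
set K := (#|{: cube m1 * cube m2}|%:R : R).
have K0 : K != 0 by rewrite /K card_cube2 mulf_neq0 // expf_neq0 // pnatr_eq0.
have cnt : forall z : cube n,
  (#|[pred xy : blocks n m1 * blocks n m2 | [forall i, h (xy.1 i) (xy.2 i) == z i]]|%:R : R)
   = (K / 2) ^+ n.
  move=> z; rewrite -sum1_card natr_sum big_mkcond /=.
  have ifE : forall b : bool, (if b then 1 else 0 : R) = b%:R by case.
  under eq_bigr => xy _ do rewrite inE ifE forall_prod.
  rewrite (@sum_pair_prod n _ _ (fun i u v => (h u v == z i)%:R)).
  rewrite -[in RHS](card_ord n) -prodr_const; apply: eq_bigr => i _.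
  under eq_bigr => uv _ do rewrite eq_sgn.
  rewrite -big_distrl /= big_split /= -big_distrl /= (sum_sgn_bal bal) mul0r addr0.
  by rewrite /K -sum1_card natr_sum.
rewrite /fhat /fiber /= !ExpE.
under eq_bigr => z _ do rewrite cnt mulrAC.
rewrite -big_distrl /= card_cube card_blocks2 -/K.
have core : \sum_(z : cube n)
   (\sum_(xy : blocks n m1 * blocks n m2 | [forall i, h (xy.1 i) (xy.2 i) == z i]) C xy.1 xy.2) * chi I z
  = \sum_(xy : blocks n m1 * blocks n m2) C xy.1 xy.2 * \prod_(i in I) sgn (h (xy.1 i) (xy.2 i)).
  under eq_bigr => z _ do rewrite big_distrl /=.
  rewrite (exchange_big_dep xpredT) //=; apply: eq_bigr => xy _.
  rewrite (big_pred1 [ffun i => h (xy.1 i) (xy.2 i)]).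
    by rewrite /chi; congr (_ * _); apply: eq_bigr => i _; rewrite ffunE.
  move=> z /=; apply/forallP/eqP => [H|->].
    by apply/ffunP => i; rewrite ffunE (eqP (H i)).
  by move=> i; rewrite ffunE.
by rewrite core -mulrA -invfM -exprMn divfK // pnatr_eq0.
Qed.


Definition par m (S : {set 'I_m}) (u : cube m) : bool := \big[addb/false]_(j in S) u j.

Lemma sgn_par m (S : {set 'I_m}) u : sgn (par S u) = chi S u :> R.
Proof. by rewrite /par /chi (big_morph (fun b => sgn b : R) (@sgnM) (_ : sgn false = 1)). Qed.

Definition lift n m (S : {set 'I_m}) (x : blocks n m) : blocks n 1 :=
  [ffun i => [ffun _ => par S (x i)]].

Lemma lift_eq n m (S : {set 'I_m}) (x : blocks n m) (a : blocks n 1) :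
  (lift S x == a) = [forall i, par S (x i) == a i ord0].
Proof.
apply/eqP/forallP => [<- i|H]; first by rewrite !ffunE.
apply/ffunP => i; apply/ffunP => j; by rewrite !ffunE (ord1 j) (eqP (H i)).
Qed.

Lemma ghat_const m1 m2 (S : {set 'I_m1}) (T : {set 'I_m2}) :
  ghat (fun _ _ => false) S T =
  (\sum_(u : cube m1) chi S u) * (\sum_(v : cube m2) chi T v) / #|{: cube m1 * cube m2}|%:R :> R.
Proof.
rewrite /ghat ExpE big_distrlr pair_bigA /=; congr (_ / _).
by apply: eq_bigr => uv _; rewrite mul1r.
Qed.

Lemma sum_chi_set0 m : \sum_(u : cube m) chi finset.set0 u = (2 : R) ^+ m.
Proof.
under eq_bigr do rewrite chi0.
by rewrite -card_cube -sum1_card natr_sum.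
Qed.

Lemma local m1 m2 (h' : gadget m1 m2) (S : {set 'I_m1}) (T : {set 'I_m2}) (a b : bool) :
  (\sum_(uv : cube m1 * cube m2)
     (par S uv.1 == a)%:R * (par T uv.2 == b)%:R * sgn (h' uv.1 uv.2))
   / #|{: cube m1 * cube m2}|%:R
  = (ghat h' finset.set0 finset.set0 + sgn a * ghat h' S finset.set0
     + sgn b * ghat h' finset.set0 T + sgn a * sgn b * ghat h' S T) / 4 :> R.
Proof.
set K := (#|{: cube m1 * cube m2}|%:R : R).
have K0 : K != 0 by rewrite /K card_cube2 mulf_neq0 // expf_neq0 // pnatr_eq0.
rewrite /ghat !ExpE -/K !big_distrl !big_distrr -!big_split /= big_distrl /=.
apply: eq_bigr => uv _; rewrite !eq_sgn !sgn_par !chi0.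
by field.
Qed.


Definition W n (Pi : blocks n 1 -> blocks n 1 -> R) (I : {set 'I_n}) : R :=
  (\sum_(ab : blocks n 1 * blocks n 1)
     Pi ab.1 ab.2 * \prod_(i in I) (sgn (ab.1 i ord0) * sgn (ab.2 i ord0))) / 4 ^+ n.

Lemma coreB m1 m2 (h : gadget m1 m2) (S : {set 'I_m1}) (T : {set 'I_m2}) n
   (Pi : blocks n 1 -> blocks n 1 -> R) (I : {set 'I_n}) :
  S != finset.set0 -> T != finset.set0 ->
  ghat h finset.set0 finset.set0 = 0 :> R -> ghat h S finset.set0 = 0 :> R ->
  ghat h finset.set0 T = 0 :> R ->
  Exp (fun xy : blocks n m1 * blocks n m2 =>
         Pi (lift S xy.1) (lift T xy.2) * \prod_(i in I) sgn (h (xy.1 i) (xy.2 i)))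
  = ghat h S T ^+ #|I| * W Pi I.
Proof.
move=> SN TN b00 bS0 b0T.
set K := (#|{: cube m1 * cube m2}|%:R : R).
have K0 : K != 0 by rewrite /K card_cube2 mulf_neq0 // expf_neq0 // pnatr_eq0.
pose hi i : gadget m1 m2 := if i \in I then h else (fun _ _ => false).
pose G i (ab : blocks n 1 * blocks n 1) (u : cube m1) (v : cube m2) : R :=
  (par S u == ab.1 i ord0)%:R * (par T v == ab.2 i ord0)%:R * sgn (hi i u v).
have E1 : forall xy : blocks n m1 * blocks n m2,
  Pi (lift S xy.1) (lift T xy.2) * \prod_(i in I) sgn (h (xy.1 i) (xy.2 i))
  = \sum_(ab : blocks n 1 * blocks n 1) Pi ab.1 ab.2 * \prod_i G i ab (xy.1 i) (xy.2 i).
  move=> xy.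
  have -> : Pi (lift S xy.1) (lift T xy.2) =
     \sum_(ab : blocks n 1 * blocks n 1)
        Pi ab.1 ab.2 * ((lift S xy.1 == ab.1) && (lift T xy.2 == ab.2))%:R.
    rewrite (bigD1 (lift S xy.1, lift T xy.2)) //= !eqxx mulr1 big1 ?addr0 //.
    case=> a b /= Hab; by rewrite -xpair_eqE eq_sym (negbTE Hab) mulr0.
  rewrite big_distrl; apply: eq_bigr => ab _ /=; rewrite -mulrA; congr (_ * _).
  rewrite !lift_eq -mulnb natrM !forall_prod -big_split /= [\prod_(i in I) _]big_mkcond /=.
  rewrite -big_split /=; apply: eq_bigr => i _; rewrite /G /hi.
  by case: (i \in I) => /=; rewrite ?mulr1.
rewrite ExpE; under eq_bigr do rewrite E1.
rewrite exchange_big /=.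
under eq_bigr => ab _ do rewrite -mulr_sumr (@sum_pair_prod n _ _ (fun i u v => G i ab u v)).
rewrite card_blocks2 -/K big_distrl /= /W.
rewrite [X in _ = _ * X]big_distrl big_distrr /=.
apply: eq_bigr => ab _.
rewrite -mulrA [RHS]mulrCA -!mulrA; congr (_ * _).
have -> : K ^+ n = \prod_(i < n) K by rewrite prodr_const card_ord.
rewrite -prodf_div.
under eq_bigr => i _ do rewrite /G local.
have F : forall i : 'I_n,
  (ghat (hi i) finset.set0 finset.set0 +
       sgn (ab.1 i ord0) * ghat (hi i) S finset.set0 +
       sgn (ab.2 i ord0) * ghat (hi i) finset.set0 T +
       sgn (ab.1 i ord0) * sgn (ab.2 i ord0) * ghat (hi i) S T) / 4
  = (if i \in I then sgn (ab.1 i ord0) * sgn (ab.2 i ord0) * ghat h S T else 1) / 4 :> R.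
  move=> i; rewrite /hi; case: (i \in I).
    by rewrite b00 bS0 b0T !mulr0 !addr0 add0r.
  rewrite !ghat_const (sum_chi0 SN) (sum_chi0 TN) !sum_chi_set0 card_cube2.
  rewrite !mulr0 !mul0r !mulr0 !addr0 divff //.
  by rewrite mulf_neq0 // expf_neq0 // pnatr_eq0.
under eq_bigr => i _ do rewrite F.
rewrite prodf_div prodr_const card_ord -big_mkcond /= big_split /= prodr_const.
by rewrite mulrA.
Qed.


Lemma normr_sgn (b : bool) : `|sgn b : R| = 1.
Proof. by case: b; rewrite /sgn ?normrN normr1. Qed.

Lemma normr_chi m (S : {set 'I_m}) u : `|chi S u : R| = 1.
Proof. by rewrite /chi normr_prod big1 // => j _; rewrite normr_sgn. Qed.

Fixpoint pmap A B A' B' (fa : A' -> A) (fb : B' -> B) (p : proto A B) : proto A' B' :=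
  match p with
  | Leaf b => Leaf b
  | NodeA f l r => NodeA (fun x => f (fa x)) (pmap fa fb l) (pmap fa fb r)
  | NodeB f l r => NodeB (fun y => f (fb y)) (pmap fa fb l) (pmap fa fb r)
  end.

Lemma run_pmap A B A' B' (fa : A' -> A) (fb : B' -> B) p x y :
  run (pmap fa fb p) x y = run p (fa x) (fb y).
Proof. by elim: p => [b|f l IHl r IHr|f l IHl r IHr] //=; rewrite IHl IHr. Qed.

Lemma depth_pmap A B A' B' (fa : A' -> A) (fb : B' -> B) p :
  depth (pmap fa fb p) = depth p.
Proof. by elim: p => [b|f l IHl r IHr|f l IHl r IHr] //=; rewrite IHl IHr. Qed.

Definition rmap A B A' B' (fa : A' -> A) (fb : B' -> B) (P : rproto R A B) : rproto R A' B' :=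
  [seq (wp.1, pmap fa fb wp.2) | wp <- P].

Lemma rvalue_rmap A B A' B' (fa : A' -> A) (fb : B' -> B) P x y :
  rvalue (rmap fa fb P) x y = rvalue P (fa x) (fb y).
Proof. by rewrite /rvalue big_map; apply: eq_bigr => wp _ /=; rewrite run_pmap. Qed.

Lemma ok_rmap A B A' B' (fa : A' -> A) (fb : B' -> B) d P :
  rproto_ok d P -> rproto_ok d (rmap fa fb P).
Proof.
case=> H1 H2 H3; split; rewrite ?all_map ?big_map //.
by apply: sub_all H3 => wp /=; rewrite depth_pmap.
Qed.

Lemma rvalue_bound A B d (P : rproto R A B) x y : rproto_ok d P -> `|rvalue P x y| <= 1.
Proof.
case=> H1 H2 _; rewrite /rvalue -H2.
elim: P H1 {H2} => [|wp P IH] /=; first by rewrite !big_nil normr0.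
case/andP=> h0 hP; rewrite !big_cons.
apply: le_trans (ler_normD _ _) _; apply: lerD; last exact: IH.
by rewrite normrM normr_sgn mulr1 ger0_norm.
Qed.

Lemma fiber_bound m1 m2 (h : gadget m1 m2) n (C : blocks n m1 -> blocks n m2 -> R) z :
  (forall x y, `|C x y| <= 1) -> `|fiber h C z| <= 1.
Proof.
move=> HC; rewrite /fiber /=.
set N := #|_|.
have HN : (\sum_(xy : blocks n m1 * blocks n m2 | [forall i, h (xy.1 i) (xy.2 i) == z i]) 1 : R) = N%:R.
  by rewrite /N -sum1_card natr_sum.
case: (posnP N) => [->|Np]; first by rewrite invr0 mulr0 normr0.
rewrite normrM normfV (ger0_norm (ler0n _ N)) ler_pdivrMr ?ltr0n // mul1r -HN.
apply: le_trans (ler_norm_sum _ _ _) _; exact: ler_sum.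
Qed.

Lemma fhat_bound n (f : cube n -> R) I : (forall z, `|f z| <= 1) -> `|fhat f I| <= 1.
Proof.
move=> Hf; rewrite /fhat ExpE card_cube.
have P2 : (0 : R) < 2 ^+ n by rewrite exprn_gt0 // ltr0n.
rewrite normrM normfV (gtr0_norm P2) ler_pdivrMr // mul1r -card_cube.
rewrite -sum1_card natr_sum.
apply: le_trans (ler_norm_sum _ _ _) _; apply: ler_sum => z _.
by rewrite normrM normr_chi mulr1.
Qed.

Lemma L1k_bound n k (f : cube n -> R) : (forall z, `|f z| <= 1) ->
  L1k k f <= #|{: {set 'I_n}}|%:R.
Proof.
move=> Hf; rewrite /L1k -sum1_card natr_sum big_mkcond /=.
apply: ler_sum => I _; case: (#|I| == k) => //; exact: fhat_bound.
Qed.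

Lemma L1k_ge0 n k (f : cube n -> R) : 0 <= L1k k f.
Proof. by apply: sumr_ge0 => I _. Qed.


Lemma lift_setT1 n (x : blocks n 1) : lift [set: 'I_1] x = x.
Proof.
apply/ffunP => i; apply/ffunP => j; rewrite !ffunE (ord1 j) /par.
by rewrite (eq_bigl xpredT) ?big_ord1 // => k; rewrite inE.
Qed.

Lemma setT1_neq0 : [set: 'I_1] != finset.set0.
Proof. by apply/set0Pn; exists ord0; rewrite inE. Qed.

Lemma xor_hat (S T : {set 'I_1}) : ghat xor_gadget S T =
  (\sum_(u : cube 1) chi [set: 'I_1] u * chi S u) *
  (\sum_(v : cube 1) chi [set: 'I_1] v * chi T v) / #|{: cube 1 * cube 1}|%:R :> R.
Proof.
rewrite /ghat ExpE big_distrlr pair_bigA /=; congr (_ / _).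
by apply: eq_bigr => uv _; rewrite /xor_gadget sgnM !chi1T; ring.
Qed.

Lemma sum_chiT_set0 : \sum_(u : cube 1) chi [set: 'I_1] u * chi finset.set0 u = 0 :> R.
Proof.
under eq_bigr do rewrite chi0 mulr1.
exact: sum_chi0 setT1_neq0.
Qed.

Lemma sum_chiT_T : \sum_(u : cube 1) chi [set: 'I_1] u * chi [set: 'I_1] u = 2 :> R.
Proof.
under eq_bigr => u _ do rewrite chi1T sgn2 -(chi0 u).
by rewrite sum_chi_set0 expr1.
Qed.

Lemma xor00 : ghat xor_gadget finset.set0 finset.set0 = 0 :> R.
Proof. by rewrite xor_hat sum_chiT_set0 !mul0r. Qed.
Lemma xorT0 : ghat xor_gadget [set: 'I_1] finset.set0 = 0 :> R.
Proof. by rewrite xor_hat sum_chiT_set0 mulr0 mul0r. Qed.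
Lemma xor0T : ghat xor_gadget finset.set0 [set: 'I_1] = 0 :> R.
Proof. by rewrite xor_hat sum_chiT_set0 !mul0r. Qed.
Lemma xorTT : ghat xor_gadget [set: 'I_1] [set: 'I_1] = 1 :> R.
Proof.
by rewrite xor_hat sum_chiT_T card_cube2 expr1 divff // mulf_neq0 // pnatr_eq0.
Qed.

Lemma card_sets m : (#|{: {set 'I_m}}|%:R : R) = 2 ^+ m.
Proof.
rewrite -sum1_card natr_sum.
have H : \sum_(S : {set 'I_m}) (1:R) = \prod_(j < m) (1 + 1).
  rewrite -(sum_set_prod (fun _ => 1)); apply: eq_bigr => S _; by rewrite big1.
by rewrite H prodr_const card_ord.
Qed.

End Aux.

Theorem theorem7p5 (R : realType) (m1 m2 : nat) (g : gadget m1 m2) :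
  (forall (S : {set 'I_m1}) (T : {set 'I_m2}),
      (S == finset.set0) || (T == finset.set0) -> ghat (R := R) g S T = 0) ->
  forall k d n : nat,
    L1k_gadget (R := R) xor_gadget k d n
      <= (max_ghat (R := R) g) ^- k * L1k_gadget (R := R) g k d n
    /\ (max_ghat (R := R) g) ^- k * L1k_gadget (R := R) g k d n
      <= Num.sqrt 2 ^+ ((m1 + m2) * k) * L1k_gadget (R := R) g k d n.
Proof.
move=> Hg k d n.
set mx := max_ghat g.
rewrite /L1k_gadget.
set Eg := [set L1k k (fiber g (rvalue P)) | P in
         [set P : rproto R (blocks n m1) (blocks n m2) | rproto_ok d P]]%classic.
set Ex := [set L1k k (fiber xor_gadget (rvalue P)) | P in
         [set P : rproto R (blocks n 1) (blocks n 1) | rproto_ok d P]]%classic.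
have ubg : has_ubound Eg.
  exists (#|{: {set 'I_n}}|%:R) => v [P HP <-].
  apply: L1k_bound => z; apply: fiber_bound => x y; exact: rvalue_bound HP.
have P0 : forall A B, rproto_ok d [:: ((1:R), @Leaf A B false)].
  by move=> A B; split; rewrite /= ?big_cons ?big_nil ?addr0 ?ler01.
have Lg0 : 0 <= sup Eg.
  apply: le_trans (L1k_ge0 k (fiber g (rvalue [:: ((1:R), @Leaf (blocks n m1) (blocks n m2) false)]))) _.
  by apply: (ub_le_sup ubg); exists [:: ((1:R), Leaf false)] => //; exact: P0.
have hmax : forall ST : {set 'I_m1} * {set 'I_m2}, `|ghat g ST.1 ST.2| <= mx.
  by move=> ST; rewrite /mx /max_ghat (bigD1 ST) //= le_max lexx.
have hmx0 : 0 <= mx by apply: le_trans (hmax (finset.set0, finset.set0)).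
have hex : mx = 0 \/ exists ST : {set 'I_m1} * {set 'I_m2}, mx = `|ghat g ST.1 ST.2|.
  rewrite /mx /max_ghat.
  apply: (big_ind (fun x => x = 0 \/ exists ST : {set 'I_m1} * {set 'I_m2}, x = `|ghat g ST.1 ST.2|)) => [|x y Hx Hy|ST _]; [by left | | by right; exists ST].
  by rewrite maxEle; case: ifP.
have hsq : 1 <= mx ^+ 2 * (2 ^+ m1 * 2 ^+ m2).
  rewrite -[X in X <= _](parseval R g).
  have -> : (2 ^+ m1 * 2 ^+ m2 : R) = \sum_(ST : {set 'I_m1} * {set 'I_m2}) 1.
    by rewrite -!card_sets -natrM -card_prod -sum1_card natr_sum.
  rewrite big_distrr /=; apply: ler_sum => ST _; rewrite mulr1.
  rewrite -(real_normK (num_real (ghat g ST.1 ST.2))).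
  by apply: lerXn2r; rewrite ?nnegrE ?normr_ge0 //.
have mx0 : 0 < mx.
  rewrite lt_def hmx0 andbT; apply/eqP => E.
  by move: hsq; rewrite E expr0n /= mul0r ler10.
have [[S T] hST] : exists ST : {set 'I_m1} * {set 'I_m2}, mx = `|ghat g ST.1 ST.2|.
  by case: hex => // E; move: mx0; rewrite E ltxx.
move: hST => /= hST.
split.
  apply: ge_sup.
    exists (L1k k (fiber xor_gadget (rvalue [:: ((1:R), @Leaf (blocks n 1) (blocks n 1) false)]))).
    by exists [:: ((1:R), Leaf false)] => //; exact: P0.
  move=> v [P HP <-].
  have SN : S != finset.set0.
    apply/negP => /eqP ES; have := mx0; rewrite hST (Hg S T); last by rewrite ES eqxx.
    by rewrite normr0 ltxx.
  have TN : T != finset.set0.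
    apply/negP => /eqP ET; have := mx0; rewrite hST (Hg S T); last by rewrite ET eqxx orbT.
    by rewrite normr0 ltxx.
  have b00 : ghat g finset.set0 finset.set0 = 0 :> R by apply: Hg; rewrite eqxx.
  have bS0 : ghat g S finset.set0 = 0 :> R by apply: Hg; rewrite eqxx orbT.
  have b0T : ghat g finset.set0 T = 0 :> R by apply: Hg; rewrite eqxx.
  set P' := rmap (lift S) (lift T) P.
  have HP' : rproto_ok d P' by exact: ok_rmap.
  have Hkey : L1k k (fiber g (rvalue P')) = mx ^+ k * L1k k (fiber xor_gadget (rvalue P)).
    rewrite /L1k big_distrr /=; apply: eq_bigr => I /eqP HI.
    rewrite fiberE // fiberE ?(xor00 R) //.
    have -> : Exp (fun xy : blocks n m1 * blocks n m2 => rvalue P' xy.1 xy.2 * \prod_(i in I) sgn (g (xy.1 i) (xy.2 i)))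
      = Exp (fun xy : blocks n m1 * blocks n m2 => rvalue P (lift S xy.1) (lift T xy.2) * \prod_(i in I) sgn (g (xy.1 i) (xy.2 i))).
      by rewrite !ExpE; congr (_ / _); apply: eq_bigr => xy _; rewrite rvalue_rmap.
    rewrite coreB //.
    have -> : Exp (fun xy : blocks n 1 * blocks n 1 => rvalue P xy.1 xy.2 * \prod_(i in I) sgn (xor_gadget (xy.1 i) (xy.2 i)))
      = Exp (fun xy : blocks n 1 * blocks n 1 => rvalue P (lift [set: 'I_1] xy.1) (lift [set: 'I_1] xy.2) * \prod_(i in I) sgn (xor_gadget (xy.1 i) (xy.2 i))).
      by rewrite !ExpE; congr (_ / _); apply: eq_bigr => xy _; rewrite !lift_setT1.
    rewrite coreB ?setT1_neq0 ?(xor00 R) ?(xorT0 R) ?(xor0T R) // (xorTT R) expr1n mul1r.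
    by rewrite normrM normrX -hST HI.
  have : L1k k (fiber g (rvalue P')) <= sup Eg.
    by apply: (ub_le_sup ubg); exists P'.
  rewrite Hkey => Hle.
  have mxk0 : mx ^+ k != 0 by rewrite expf_neq0 // gt_eqF.
  rewrite -[X in X <= _](mulKf mxk0); apply: ler_wpM2l => //.
  by rewrite invr_ge0 exprn_ge0.
apply: ler_wpM2r => //.
have hinv : mx^-1 <= Num.sqrt 2 ^+ (m1 + m2).
  rewrite -ler_sqr ?nnegrE ?invr_ge0 ?exprn_ge0 ?sqrtr_ge0 //.
  rewrite exprAC sqr_sqrtr ?ler0n // exprD.
  rewrite exprVn -(mul1r (_^-1)) ler_pdivrMr ?exprn_gt0 // mulrC.
  exact: hsq.
rewrite -exprVn exprM; apply: (lerXn2r k) => //; rewrite nnegrE ?invr_ge0 ?exprn_ge0 ?sqrtr_ge0 //.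
Qed.
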